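(* Consider the two-type branching process in random environment with geometric offspring laws described in the context, started from $z=(z_1,z_2)\in\mathbb N_0^2$, and let $S_i(k)=X_i(1)+\dots+X_i(k)$, $S_i(0)=0$. There is a constant $C$ such that for every $\varepsilon>0$, every $i\in\{1,2\}$, every $n\ge1$ and every realization of the environment $\mathbf\Pi$, $$\mathbf P_z\Big(\max_{k\le n}\big|\log Z_i(k)-S_i(k)\big|\ge\varepsilon\sqrt n,\ Z_i(n)>0\ \Big|\ \mathbf\Pi\Big)\le C z_i\,n\,e^{-\varepsilon\sqrt n}.$$
   Context: Environment: $(P_1,P_2)$ is a random vector in $(0,1)^2$; $\mathbf Q=(Q_1,Q_2)$ with $Q_i(\{j\})=P_i(1-P_i)^j$, $j\in\mathbb N_0$; the environment $\mathbf\Pi=(\mathbf Q(n))_{n\ge1}$ consists of i.i.d. copies of $\mathbf Q$ (parameters $(P_1(n),P_2(n))$). Given $\mathbf\Pi$ and $Z(n)=(z_1,z_2)$, $Z(n+1)$ is distributed as $\big(\sum_{j=1}^{z_1}\xi_1^{(n)}(j),\sum_{j=1}^{z_2}\xi_2^{(n)}(j)\big)$ with, conditionally on $\mathbf\Pi$, independent $\xi_i^{(n)}(j)$ of law $Q_i(n+1)$. $\mathbf P_z$ is the law with $Z(0)=z$. $X_i(n)=\log\frac{1-P_i(n)}{P_i(n)}$ is the logarithm of the mean of $Q_i(n)$. *)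

(* Defs.v *)
From HB Require Import structures.
From mathcomp Require Import all_boot all_order all_algebra.
From mathcomp Require Import all_classical all_reals all_analysis.
Set Implicit Arguments. Unset Strict Implicit. Unset Printing Implicit Defensive.
Import Order.TTheory GRing.Theory Num.Theory.
Local Open Scope ring_scope.

Section BPRE.
Variable R : realType.

Definition geom_pmf (p : R) (j : nat) : R := p * (1 - p) ^+ j.

Definition conv (f g : nat -> R) (y : nat) : R :=
  \sum_(j < y.+1) f j * g (y - j)%N.

Fixpoint convpow (f : nat -> R) (x : nat) : nat -> R :=
  match x with
  | 0 => fun y => (y == 0%N)%:R
  | x'.+1 => conv f (convpow f x')
  end.

(* type coordinate i in {1,2}, encoded as i : 'I_2 (0 <-> type 1, 1 <-> type 2) *)
Definition coordt (i : 'I_2) (x : nat * nat) : nat :=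
  if i == ord0 then x.1 else x.2.

Definition par (i : 'I_2) (q : R * R) : R := if i == ord0 then q.1 else q.2.

(* one-step transition given the environment parameters q = (P_1(n+1),P_2(n+1)):
   the two coordinates are, conditionally on the environment, independent sums
   of i.i.d. geometric offspring numbers *)
Definition trans (q : R * R) (x y : nat * nat) : R :=
  convpow (geom_pmf q.1) x.1 y.1 * convpow (geom_pmf q.2) x.2 y.2.

(* Quenched probability, given the environment P (P n = (P_1(n),P_2(n)), n >= 1),
   that the path [Z(k); Z(k+1); ...; Z(k+m)] started at Z(k) = x satisfies E. *)
Fixpoint qlaw (P : nat -> R * R) (k m : nat) (x : nat * nat)
    (E : seq (nat * nat) -> bool) : \bar R :=
  match m with
  | 0 => ((E [:: x])%:R)%:E
  | m'.+1 => \esum_(y in [set: nat * nat])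
               ((trans (P k.+1) x y)%:E * qlaw P k.+1 m' y (fun s => E (x :: s)))%E
  end.

Definition quenched (P : nat -> R * R) (z : nat * nat) (n : nat)
    (E : seq (nat * nat) -> bool) : \bar R := qlaw P 0 n z E.

Definition Xenv (P : nat -> R * R) (i : 'I_2) (n : nat) : R :=
  ln ((1 - par i (P n)) / par i (P n)).

Definition Senv (P : nat -> R * R) (i : 'I_2) (k : nat) : R :=
  \sum_(1 <= j < k.+1) Xenv P i j.

Definition dev_event (P : nat -> R * R) (i : 'I_2) (n : nat) (eps : R)
    (s : seq (nat * nat)) : bool :=
  [exists k : 'I_n.+1,
     eps * Num.sqrt (n%:R) <=
       `| ln ((coordt i (nth (0%N, 0%N) s k))%:R) - Senv P i k | ]
  && (0 < coordt i (nth (0%N, 0%N) s n))%N.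

End BPRE.

(* Main.v *)
Require Import Defs.
From HB Require Import structures.
From mathcomp Require Import all_boot all_order all_algebra.
From mathcomp Require Import all_classical all_reals all_analysis.
From mathcomp Require Import ring lra.
Import Order.TTheory GRing.Theory Num.Theory.
Local Open Scope ring_scope.
Local Open Scope ereal_scope.

Lemma fin_series (R : realType) (g : nat -> R) y : (forall j, (0 <= g j)%R) ->
  \sum_(j <oo) (if (j <= y)%N then (g j)%:E else 0) = (\sum_(j < y.+1) g j)%R%:E.
Proof.
move=> g0.
rewrite (nneseries_split 0 y.+1); last by move=> k _; case: ifP => //; rewrite lee_fin.
rewrite eseries0 ?adde0; last by move=> i; rewrite ltnNge => /negbTE ->.
rewrite (_ : (0 + y.+1)%N = y.+1)// big_mkord -sumEFin; apply: eq_bigr => k _.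
by rewrite -ltnS ltn_ord.
Qed.

Lemma cauchy (R : realType) (a b : nat -> R) ra rb :
  (forall j, 0 <= a j)%R -> (forall j, 0 <= b j)%R ->
  \sum_(j <oo) (a j)%:E = ra%:E -> \sum_(j <oo) (b j)%:E = rb%:E ->
  \sum_(y <oo) (\sum_(j < y.+1) a j * b (y - j)%N)%R%:E = (ra * rb)%:E.
Proof.
move=> a0 b0 ha hb.
transitivity (\sum_(y <oo) \sum_(j <oo)
   (if (j <= y)%N then (a j * b (y - j)%N)%:E else 0)).
  by apply: eq_eseriesr => y _; rewrite fin_series // => j; rewrite mulr_ge0.
rewrite nneseries_interchange; last first.
  by move=> i j; case: ifP => //; rewrite lee_fin mulr_ge0.
transitivity (\sum_(j <oo) (rb%:E * (a j)%:E)).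
  apply: eq_eseriesr => j _.
  rewrite -(eseries_mkcond (P := fun y => (j <= y)%N)) -ereal_series.
  rewrite -nneseries_addn; last by move=> i; rewrite lee_fin mulr_ge0.
  rewrite (eq_eseriesr (g := fun i => (a j)%:E * (b i)%:E)); last first.
    by move=> i _; rewrite addnK EFinM.
  rewrite nneseriesZl ?hb; last by move=> i _; rewrite lee_fin.
  by rewrite muleC.
rewrite nneseriesZl ?ha; last by move=> i _; rewrite lee_fin.
by rewrite -EFinM mulrC.
Qed.

Lemma geom_pgf (R : realType) (p u : R) : (0 < p < 1)%R -> (0 <= u <= 1)%R ->
  \sum_(j <oo) (geom_pmf p j * u ^+ j)%:E = (p / (1 - (1 - p) * u))%:E.
Proof.
move=> /andP[p0 p1] /andP[u0 u1].
have z0 : (0 <= (1 - p) * u)%R by rewrite mulr_ge0 // subr_ge0 ltW.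
have z1 : (`|(1 - p) * u| < 1)%R.
  rewrite ger0_norm //; apply: (@le_lt_trans _ _ (1 - p)%R).
    by rewrite -[leRHS]mulr1 ler_wpM2l // subr_ge0 ltW.
  by rewrite ltrBlDr ltrDl.
have cv := @cvg_geometric_series _ p _ z1.
transitivity (limn (EFin \o series (geometric p ((1 - p) * u)%R))).
  apply/congr_lim/funext => n /=; rewrite /series /= sumEFin.
  by congr (_%:E); apply: eq_bigr => k _; rewrite /geom_pmf exprMn mulrA.
rewrite EFin_lim; last exact: is_cvg_geometric_series.
have /(@cvg_unique _ (@Rhausdorff R)) := cv.
by move/(_ _ (@is_cvg_geometric_series _ p _ z1)) => ->.
Qed.

Lemma convpow_ge0 (R : realType) (f : nat -> R) x y : (forall j, 0 <= f j)%R ->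
  (0 <= convpow f x y)%R.
Proof.
move=> f0; elim: x y => [|x IH] y /=; first by case: (y == 0%N).
by rewrite /conv sumr_ge0 // => j _; rewrite mulr_ge0.
Qed.

Lemma convpow_pgf (R : realType) (f : nat -> R) (u r : R) :
  (forall j, 0 <= f j)%R -> (0 <= u)%R ->
  \sum_(j <oo) (f j * u ^+ j)%:E = r%:E ->
  forall x, \sum_(y <oo) (convpow f x y * u ^+ y)%:E = (r ^+ x)%:E.
Proof.
move=> f0 u0 hr; elim=> [|x IH].
  rewrite nneseries_recl //=; last by move=> k _; rewrite lee_fin mulr_ge0 // ?exprn_ge0 //; case: (k == 0%N).
  rewrite eseries0 ?adde0 ?mul1r ?expr0 //.
  by move=> i i1 _ /=; rewrite (gtn_eqF i1) mul0r.
rewrite exprS -(@cauchy R (fun j => f j * u ^+ j)%R (fun j => convpow f x j * u ^+ j)%R) //.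
- apply: eq_eseriesr => y _ /=; congr (_%:E); rewrite /conv mulr_suml.
  apply: eq_bigr => j _; rewrite mulrACA -exprD.
  by rewrite subnKC // -ltnS ltn_ord.
- by move=> j; rewrite mulr_ge0 // exprn_ge0.
- by move=> j; rewrite mulr_ge0 ?convpow_ge0 // exprn_ge0.
Qed.

Lemma esum_pair (R : realType) (a b : nat -> R) ra rb :
  (forall j, 0 <= a j)%R -> (forall j, 0 <= b j)%R ->
  \sum_(j <oo) (a j)%:E = ra%:E -> \sum_(j <oo) (b j)%:E = rb%:E ->
  \esum_(y in [set: nat * nat]) (a y.1 * b y.2)%:E = (ra * rb)%:E.
Proof.
move=> a0 b0 ha hb.
have -> : [set: nat * nat]%classic = ([set: nat] `*`` (fun=> [set: nat]))%classic.
  by apply/seteqP; split.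
rewrite -(@esum_esum _ _ _ _ _ (fun i j => (a i * b j)%:E)); last first.
  by move=> i j _ _; rewrite lee_fin mulr_ge0.
rewrite -nneseries_esumT; last by move=> n; apply: esum_ge0 => j _; rewrite lee_fin mulr_ge0.
transitivity (\sum_(i <oo) ((rb%:E) * (a i)%:E)).
  apply: eq_eseriesr => i _.
  rewrite -nneseries_esumT; last by move=> n; rewrite lee_fin mulr_ge0.
  under eq_eseriesr do rewrite EFinM.
  rewrite nneseriesZl ?hb; last by move=> j _; rewrite lee_fin.
  by rewrite muleC.
rewrite nneseriesZl ?ha; last by move=> j _; rewrite lee_fin.
by rewrite -EFinM mulrC.
Qed.

Local Close Scope ereal_scope.
Set Implicit Arguments. Unset Strict Implicit.

Definition fgen (R : realType) (p u : R) : R := p / (1 - (1 - p) * u).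

Fixpoint Gc (R : realType) (P : nat -> R * R) (i : 'I_2) (j d : nat) (t : R) : R :=
  match d with
  | 0 => t
  | d'.+1 => fgen (par i (P j.+1)) (Gc P i j.+1 d' t)
  end.

Definition Ac (R : realType) (P : nat -> R * R) (i : 'I_2) (j d : nat) : R :=
  expR (- \sum_(j.+1 <= l < (j + d).+1) Xenv P i l).

Lemma par_01 (R : realType) (P : nat -> R * R) i m :
  (forall m : nat, 0 < (P m).1 < 1 /\ 0 < (P m).2 < 1) -> 0 < par i (P m) < 1.
Proof. by move=> hP; rewrite /par; case: ifP => _; case: (hP m). Qed.

Lemma fgen_01 (R : realType) (p w : R) : 0 < p < 1 -> 0 <= w <= 1 ->
  0 <= fgen p w <= 1.
Proof.
move=> /andP[p0 p1] /andP[w0 w1].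
have hd : p <= 1 - (1 - p) * w.
  by rewrite lerBrDr -lerBrDl -[leRHS]mulr1 ler_wpM2l // subr_ge0 ltW.
have d0 : 0 < 1 - (1 - p) * w by apply: lt_le_trans hd.
rewrite /fgen; apply/andP; split; first by rewrite divr_ge0 // ltW.
by rewrite ler_pdivrMr // mul1r.
Qed.

Lemma fgen1 (R : realType) (p : R) : 0 < p -> fgen p 1 = 1.
Proof. by move=> p0; rewrite /fgen mulr1 opprB addrC subrK divff // gt_eqF. Qed.

Lemma Gc_01 (R : realType) (P : nat -> R * R) i :
  (forall m : nat, 0 < (P m).1 < 1 /\ 0 < (P m).2 < 1) ->
  forall d j t, 0 <= t <= 1 -> 0 <= Gc P i j d t <= 1.
Proof.
move=> hP; elim=> [|d IH] j t ht //=.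
by apply: fgen_01; [exact: par_01|exact: IH].
Qed.

Lemma Gc1 (R : realType) (P : nat -> R * R) i :
  (forall m : nat, 0 < (P m).1 < 1 /\ 0 < (P m).2 < 1) ->
  forall d j, Gc P i j d 1 = 1.
Proof.
move=> hP; elim=> [|d IH] j //=.
by rewrite IH fgen1 //; case/andP: (par_01 i j.+1 hP).
Qed.

Lemma fgen_inv (R : realType) (p w : R) : 0 < p < 1 -> 0 <= w < 1 ->
  fgen p w < 1 /\ (1 - fgen p w)^-1 = p / (1 - p) * (1 - w)^-1 + 1.
Proof.
move=> /andP[p0 p1] /andP[w0 w1].
have h1 : 0 < (1 - p) * (1 - w) by rewrite mulr_gt0 // subr_gt0.
have h2 : 0 < 1 - (1 - p) * w by nra.
split.
  by rewrite /fgen ltr_pdivrMr // mul1r; nra.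
rewrite /fgen; field.
have e : 1 - (1 - p) * w - p = (1 - p) * (1 - w) by ring.
apply/and4P; split.
- by rewrite gt_eqF // subr_gt0.
- by rewrite gt_eqF // subr_gt0.
- by rewrite gt_eqF.
- by rewrite e gt_eqF.
Qed.

Lemma Ac_S (R : realType) (P : nat -> R * R) i j d :
  (forall m : nat, 0 < (P m).1 < 1 /\ 0 < (P m).2 < 1) ->
  Ac P i j d.+1 = par i (P j.+1) / (1 - par i (P j.+1)) * Ac P i j.+1 d.
Proof.
move=> hP; rewrite /Ac addnS -addSn big_ltn ?ltnS ?leq_addr //.
rewrite opprD expRD /Xenv; congr (_ * _).
case/andP: (par_01 i j.+1 hP) => p0 p1.
rewrite expRN lnK ?invf_div //.
by rewrite posrE divr_gt0 // subr_gt0.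
Qed.

Lemma Ac_gt0 (R : realType) (P : nat -> R * R) i j d : 0 < Ac P i j d.
Proof. exact: expR_gt0. Qed.

Lemma Gc_inv (R : realType) (P : nat -> R * R) i :
  (forall m : nat, 0 < (P m).1 < 1 /\ 0 < (P m).2 < 1) ->
  forall d j, exists b, 0 <= b /\ 1 <= Ac P i j d + b /\
    forall t, 0 <= t < 1 -> Gc P i j d t < 1 /\
      (1 - Gc P i j d t)^-1 = Ac P i j d / (1 - t) + b.
Proof.
move=> hP; elim=> [|d IH] j.
  exists 0; rewrite /Ac addn0 big_geq // oppr0 expR0 addr0; split=> //.
  split=> // t /andP[t0 t1]; split=> //; by rewrite div1r addr0.
have [b [b0 [_ hb]]] := IH j.+1.
case/andP: (par_01 i j.+1 hP) => p0 p1.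
have q0 : 0 <= par i (P j.+1) / (1 - par i (P j.+1)).
  by rewrite divr_ge0 ?subr_ge0 ?ltW.
exists (par i (P j.+1) / (1 - par i (P j.+1)) * b + 1); split.
  by rewrite addr_ge0 // mulr_ge0.
split.
  have := Ac_gt0 P i j d.+1; have := mulr_ge0 q0 b0; lra.
move=> t ht; have [hG hGi] := hb t ht.
have hw : 0 <= Gc P i j.+1 d t < 1.
  have ht' : 0 <= t <= 1 by case/andP: ht => -> /ltW ->.
  by rewrite hG andbT; case/andP: (Gc_01 i hP d j.+1 ht').
have [f1 f2] := fgen_inv (par_01 i j.+1 hP) hw.
split=> //=; rewrite f2 hGi Ac_S //; field.
case/andP: ht => _ t1; apply/andP; split; rewrite gt_eqF // subr_gt0 //.
Qed.


Lemma geom_ge0 (R : realType) (p : R) j : 0 < p < 1 -> 0 <= geom_pmf p j.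
Proof. case/andP=> p0 p1; rewrite /geom_pmf mulr_ge0 ?ltW //.
by rewrite exprn_gt0 // subr_gt0.
Qed.

Lemma trans_pgf (R : realType) (q : R * R) x u1 u2 :
  0 < q.1 < 1 -> 0 < q.2 < 1 -> 0 <= u1 <= 1 -> 0 <= u2 <= 1 ->
  (\esum_(y in [set: nat * nat]) (trans q x y * (u1 ^+ y.1 * u2 ^+ y.2))%:E
   = ((fgen q.1 u1) ^+ x.1 * (fgen q.2 u2) ^+ x.2)%:E)%E.
Proof.
move=> q1 q2 hu1 hu2.
have hu1' := hu1; have hu2' := hu2.
case/andP: hu1' => u10 _; case/andP: hu2' => u20 _.
rewrite (eq_esum (b := fun y => ((convpow (geom_pmf q.1) x.1 y.1 * u1 ^+ y.1) *
   (convpow (geom_pmf q.2) x.2 y.2 * u2 ^+ y.2))%:E)); last first.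
  by move=> y _; rewrite /trans mulrACA.
apply: (@esum_pair R (fun j => convpow (geom_pmf q.1) x.1 j * u1 ^+ j)
  (fun j => convpow (geom_pmf q.2) x.2 j * u2 ^+ j)).
- by move=> j; rewrite mulr_ge0 ?convpow_ge0 ?exprn_ge0 // => k; exact: geom_ge0.
- by move=> j; rewrite mulr_ge0 ?convpow_ge0 ?exprn_ge0 // => k; exact: geom_ge0.
- apply: convpow_pgf => //; first by move=> k; exact: geom_ge0.
  exact: geom_pgf.
- apply: convpow_pgf => //; first by move=> k; exact: geom_ge0.
  exact: geom_pgf.
Qed.

Lemma step_pgf (R : realType) (q : R * R) x (w : R) (i : 'I_2) :
  0 < q.1 < 1 -> 0 < q.2 < 1 -> 0 <= w <= 1 ->
  (\esum_(y in [set: nat * nat]) ((trans q x y)%:E * (w ^+ coordt i y)%:E)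
   = ((fgen (par i q) w) ^+ coordt i x)%:E)%E.
Proof.
move=> q1 q2 hw.
have h1 : 0 <= (1 : R) <= 1 by apply/andP; split; [exact: ler01|exact: le_refl].
rewrite /coordt /par; case: ifP => _.
- transitivity (((fgen q.1 w) ^+ x.1 * (fgen q.2 1) ^+ x.2)%:E); last first.
    by rewrite fgen1 ?expr1n ?mulr1 //; case/andP: q2.
  rewrite -trans_pgf //; apply: eq_esum => y _.
  by rewrite expr1n mulr1 EFinM.
- transitivity (((fgen q.1 1) ^+ x.1 * (fgen q.2 w) ^+ x.2)%:E); last first.
    by rewrite fgen1 ?expr1n ?mul1r //; case/andP: q1.
  rewrite -trans_pgf //; apply: eq_esum => y _.
  by rewrite expr1n mul1r EFinM.
Qed.

Lemma trans_mass (R : realType) (q : R * R) x :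
  0 < q.1 < 1 -> 0 < q.2 < 1 ->
  (\esum_(y in [set: nat * nat]) (trans q x y)%:E = 1)%E.
Proof.
move=> q1 q2.
have h1 : 0 <= (1 : R) <= 1 by apply/andP; split; [exact: ler01|exact: le_refl].
have := step_pgf x ord0 q1 q2 h1.
rewrite fgen1 ?expr1n; last by rewrite /par /=; case/andP: q1.
move=> <-; apply: eq_esum => y _; by rewrite expr1n mule1.
Qed.

Lemma trans_ge0 (R : realType) (q : R * R) x y :
  0 < q.1 < 1 -> 0 < q.2 < 1 -> 0 <= trans q x y.
Proof.
move=> q1 q2; rewrite /trans mulr_ge0 // convpow_ge0 // => j; exact: geom_ge0.
Qed.

Lemma trans_absorb (R : realType) (q : R * R) x y (i : 'I_2) :
  coordt i x = 0%N -> coordt i y <> 0%N -> trans q x y = 0.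
Proof.
rewrite /coordt /trans; case: ifP => _ hx hy; rewrite hx /=.
- by rewrite (negPf (introN eqP hy)) mul0r.
- by rewrite (negPf (introN eqP hy)) mulr0.
Qed.


Fixpoint valid (i : 'I_2) (s : seq (nat * nat)) : bool :=
  match s with
  | a :: ((b :: _) as s') =>
      ((coordt i a == 0%N) ==> (coordt i b == 0%N)) && valid i s'
  | _ => true
  end.

Definition hypP (R : realType) (P : nat -> R * R) :=
  forall m : nat, 0 < (P m).1 < 1 /\ 0 < (P m).2 < 1.

Local Open Scope ereal_scope.

Lemma qlaw_ge0 (R : realType) (P : nat -> R * R) : hypP P ->
  forall m j x E, 0 <= qlaw P j m x E.
Proof.
move=> hP; elim=> [|m IH] j x E /=; first by rewrite lee_fin ler0n.
apply: esum_ge0 => y _; apply: mule_ge0 => //.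
by rewrite lee_fin; case: (hP j.+1) => ? ?; exact: trans_ge0.
Qed.

Lemma qlaw_mono (R : realType) (P : nat -> R * R) (i : 'I_2) : hypP P ->
  forall m j x (E E' : seq (nat * nat) -> bool),
  (forall s, valid i (x :: s) -> E (x :: s) -> E' (x :: s)) ->
  qlaw P j m x E <= qlaw P j m x E'.
Proof.
move=> hP; elim=> [|m IH] j x E E' h /=.
  by case: (E [:: x]) (h [::] erefl) => [->//|_]; rewrite lee_fin ler0n.
apply: le_esum => y _.
case: (hP j.+1) => q1 q2.
have [->|ne] := eqVneq (trans (P j.+1) x y) 0%R; first by rewrite !mul0e.
apply: lee_wpmul2l; first by rewrite lee_fin trans_ge0.
apply: IH => s vs; apply: h.
change (((coordt i x == 0%N) ==> (coordt i y == 0%N)) && valid i (y :: s)).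
rewrite vs andbT.
apply/implyP => /eqP hx; apply/eqP; apply: contraNeq ne => /eqP hy.
by apply/eqP; apply: trans_absorb hx hy.
Qed.

Lemma qlaw_le1 (R : realType) (P : nat -> R * R) : hypP P ->
  forall m j x E, qlaw P j m x E <= 1.
Proof.
move=> hP; elim=> [|m IH] j x E /=; first by rewrite lee_fin; case: (E _).
case: (hP j.+1) => q1 q2.
rewrite -(trans_mass x q1 q2); apply: le_esum => y _.
rewrite -[leRHS]mule1; apply: lee_wpmul2l; first by rewrite lee_fin trans_ge0.
exact: IH.
Qed.

Lemma qlaw_false (R : realType) (P : nat -> R * R) : hypP P ->
  forall m j x (E : seq (nat * nat) -> bool), (forall s, ~~ E (x :: s)) ->
  qlaw P j m x E = 0.
Proof.
move=> hP; elim=> [|m IH] j x E h /=; first by rewrite (negPf (h [::])).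
apply: esum1 => y _; rewrite IH ?mule0 // => s; exact: h.
Qed.

Lemma qlaw_union (R : realType) (P : nat -> R * R) (N : nat) : hypP P ->
  forall m j x (E : 'I_N -> seq (nat * nat) -> bool),
  qlaw P j m x (fun s => [exists k, E k s]) <= \sum_(k < N) qlaw P j m x (E k).
Proof.
move=> hP; elim=> [|m IH] j x E /=.
  case: existsP => [[k0 hk0]|_]; last by apply: sume_ge0 => k _; rewrite lee_fin ler0n.
  rewrite (bigD1 k0) //= hk0 leeDl // sume_ge0 // => k _; rewrite lee_fin ler0n.
case: (hP j.+1) => q1 q2.
apply: (@le_trans _ _ (\esum_(y in [set: nat * nat])
   \sum_(k < N) ((trans (P j.+1) x y)%:E * qlaw P j.+1 m y (fun s => E k (x :: s))))).
  apply: le_esum => y _.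
  rewrite -ge0_sume_distrr; last by move=> k _; exact: qlaw_ge0.
  apply: lee_wpmul2l; first by rewrite lee_fin trans_ge0.
  exact: (IH j.+1 y (fun k s => E k (x :: s))).
rewrite esum_sum // => y k _ _; apply: mule_ge0; last exact: qlaw_ge0.
by rewrite lee_fin trans_ge0.
Qed.

Lemma esum_pairE (R : realType) (a : nat * nat -> \bar R) :
  (forall y, 0 <= a y) ->
  \esum_(y in [set: nat * nat]) a y = \sum_(i <oo) \sum_(j <oo) a (i, j).
Proof.
move=> a0.
have -> : [set: nat * nat]%classic = ([set: nat] `*`` (fun=> [set: nat]))%classic.
  by apply/seteqP; split.
rewrite (eq_esum (b := fun y => a (y.1, y.2))); last by move=> [].
rewrite -(@esum_esum _ _ _ _ _ (fun i j => a (i, j))); last by move=> *; exact: a0.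
rewrite -nneseries_esumT; last by move=> n; apply: esum_ge0 => j _.
apply: eq_eseriesr => i _; rewrite -nneseries_esumT //.
Qed.

Lemma esumZ_pair (R : realType) (c : R) (a : nat * nat -> \bar R) :
  (0 <= c)%R -> (forall y, 0 <= a y) ->
  \esum_(y in [set: nat * nat]) (c%:E * a y) = c%:E * \esum_(y in [set: nat * nat]) a y.
Proof.
move=> c0 a0; rewrite !esum_pairE //; last by move=> y; rewrite mule_ge0.
rewrite -nneseriesZl; last by move=> i _; apply: nneseries_ge0.
by apply: eq_eseriesr => i _; rewrite nneseriesZl.
Qed.

Fixpoint Uex (R : realType) (P : nat -> R * R) (j d : nat)
    (psi : nat * nat -> \bar R) (x : nat * nat) : \bar R :=
  match d with
  | 0 => psi x
  | d'.+1 => \esum_(y in [set: nat * nat])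
               ((trans (P j.+1) x y)%:E * Uex P j.+1 d' psi y)
  end.

Lemma Uex_ge0 (R : realType) (P : nat -> R * R) : hypP P ->
  forall d j psi x, (forall y, 0 <= psi y) -> 0 <= Uex P j d psi x.
Proof.
move=> hP; elim=> [|d IH] j psi x h //=.
apply: esum_ge0 => y _; apply: mule_ge0; last exact: IH.
by case: (hP j.+1) => ? ?; rewrite lee_fin trans_ge0.
Qed.

Lemma Uex_le (R : realType) (P : nat -> R * R) : hypP P ->
  forall d j psi phi x, (forall y, psi y <= phi y) -> Uex P j d psi x <= Uex P j d phi x.
Proof.
move=> hP; elim=> [|d IH] j psi phi x h //=.
apply: le_esum => y _; apply: lee_wpmul2l; last exact: IH.
by case: (hP j.+1) => ? ?; rewrite lee_fin trans_ge0.
Qed.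

Lemma Uex_add (R : realType) (P : nat -> R * R) : hypP P ->
  forall d j psi phi x, (forall y, 0 <= psi y) -> (forall y, 0 <= phi y) ->
  Uex P j d (fun y => psi y + phi y) x = Uex P j d psi x + Uex P j d phi x.
Proof.
move=> hP; elim=> [|d IH] j psi phi x h1 h2 //=.
case: (hP j.+1) => q1 q2.
rewrite -esumD; last 2 first.
- by move=> y _; rewrite mule_ge0 ?Uex_ge0 // lee_fin trans_ge0.
- by move=> y _; rewrite mule_ge0 ?Uex_ge0 // lee_fin trans_ge0.
apply: eq_esum => y _; rewrite IH // ge0_muleDr //; exact: Uex_ge0.
Qed.

Lemma Uex_scale (R : realType) (P : nat -> R * R) (c : R) : hypP P -> (0 <= c)%R ->
  forall d j psi x, (forall y, 0 <= psi y) ->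
  Uex P j d (fun y => c%:E * psi y) x = c%:E * Uex P j d psi x.
Proof.
move=> hP c0; elim=> [|d IH] j psi x h //=.
case: (hP j.+1) => q1 q2.
rewrite -esumZ_pair //; last by move=> y; rewrite mule_ge0 ?Uex_ge0 // lee_fin trans_ge0.
by apply: eq_esum => y _; rewrite IH // muleCA.
Qed.

Lemma Uex_pgf (R : realType) (P : nat -> R * R) (i : 'I_2) : hypP P ->
  forall d j (t : R) x, (0 <= t <= 1)%R ->
  Uex P j d (fun y => (t ^+ coordt i y)%:E) x = ((Gc P i j d t) ^+ coordt i x)%:E.
Proof.
move=> hP; elim=> [|d IH] j t x ht //=.
case: (hP j.+1) => q1 q2.
under eq_esum do rewrite IH //.
by rewrite step_pgf //; apply: Gc_01.
Qed.

Lemma qlaw_Uex (R : realType) (P : nat -> R * R) : hypP P ->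
  forall d m j x (E : seq (nat * nat) -> bool) psi, (d <= m)%N ->
  (forall y, 0 <= psi y) ->
  (forall s, ((E (x :: s))%:R)%:E <= psi (nth (0%N, 0%N) (x :: s) d)) ->
  qlaw P j m x E <= Uex P j d psi x.
Proof.
move=> hP; elim=> [|d IH] m j x E psi hdm h0 h /=.
  have [h1|h1] := leP 1 (psi x).
    by apply: le_trans h1; exact: qlaw_le1.
  rewrite qlaw_false // => s; apply/negP => hE.
  by have := h s; rewrite hE /= => /(lt_le_trans h1); rewrite ltxx.
case: m hdm => [//|m] hdm /=.
case: (hP j.+1) => q1 q2.
apply: le_esum => y _; apply: lee_wpmul2l; first by rewrite lee_fin trans_ge0.
apply: IH => // s; exact: (h (y :: s)).
Qed.

Local Close Scope ereal_scope.

Lemma powdiff (R : realType) (a b : R) x : 0 <= b -> b <= a -> a <= 1 ->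
  a ^+ x - b ^+ x <= x%:R * (a - b).
Proof.
move=> b0 ba a1; elim: x => [|x IH]; first by rewrite !expr0 subrr mul0r.
have h1 : b ^+ x <= a ^+ x by rewrite lerXn2r // ?nnegrE // (le_trans b0 ba).
have h2 : b ^+ x <= 1 by rewrite exprn_ile1 // (le_trans ba a1).
have h3 : 0 <= b ^+ x by rewrite exprn_ge0.
have a0 : 0 <= a by rewrite (le_trans b0 ba).
rewrite !exprS mulrSr; nra.
Qed.

Lemma expR_pow (R : realType) (th : R) (X : nat) : expR (- th) ^+ X = expR (- (th * X%:R)).
Proof. by rewrite -expRM_natr mulNr. Qed.

Lemma up_pt (R : realType) (c : R) (X : nat) : 0 < c -> c <= X%:R ->
  expR (- c^-1) ^+ X <= 2^-1.
Proof.
move=> c0 cX; rewrite expR_pow.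
have h : 1 <= c^-1 * X%:R by rewrite ler_pdivlMl // mulr1.
apply: (@le_trans _ _ (expR (-1))).
  by rewrite ler_expR lerN2.
rewrite expRN -[X in _ <= X]invrK lef_pV2 ?posrE ?expR_gt0 //.
by have := expR_ge1Dx (1 : R); lra.
Qed.

Lemma down_pt (R : realType) (c : R) (X : nat) : 0 < c -> X%:R <= c ->
  2^-1 <= expR (- (2 * c)^-1) ^+ X.
Proof.
move=> c0 cX; rewrite expR_pow.
have h : (2 * c)^-1 * X%:R <= 2^-1.
  by rewrite ler_pdivrMl ?mulr_gt0 // mulrC mulrA mulVf ?mul1r // gt_eqF.
apply: (@le_trans _ _ (expR (- 2^-1))); last by rewrite ler_expR lerN2.
by have := expR_ge1Dx (- 2^-1 : R); lra.
Qed.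

Local Open Scope ereal_scope.

Lemma addeK_fin (R : realType) (a : \bar R) (r q : R) : a + r%:E = q%:E -> a = (q - r)%:E.
Proof. by case: a => [x||] //= [<-]; rewrite addrK. Qed.

Lemma Uex_ext (R : realType) (P : nat -> R * R) : hypP P ->
  forall d j psi phi x, (forall y, psi y = phi y) -> Uex P j d psi x = Uex P j d phi x.
Proof.
move=> hP d j psi phi x h; apply/eqP; rewrite eq_le; apply/andP; split;
  by apply: Uex_le => // y; rewrite h.
Qed.

Lemma Uex_diff (R : realType) (P : nat -> R * R) (i : 'I_2) : hypP P ->
  forall d j x (t1 t2 : R), (0 <= t2)%R -> (t2 <= t1)%R -> (t1 <= 1)%R ->
  Uex P j d (fun y => (t1 ^+ coordt i y - t2 ^+ coordt i y)%:E) x =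
  ((Gc P i j d t1) ^+ coordt i x - (Gc P i j d t2) ^+ coordt i x)%:E.
Proof.
move=> hP d j x t1 t2 t20 t21 t11.
have ht1 : (0 <= t1 <= 1)%R by rewrite t11 (le_trans t20 t21).
have ht2 : (0 <= t2 <= 1)%R by rewrite t20 (le_trans t21 t11).
apply: addeK_fin.
rewrite -!Uex_pgf // -Uex_add //; last 2 first.
- by move=> y; rewrite lee_fin subr_ge0 lerXn2r // ?nnegrE // (le_trans t20 t21).
- by move=> y; rewrite lee_fin exprn_ge0.
by apply: Uex_ext => // y; rewrite -EFinD subrK.
Qed.

Local Close Scope ereal_scope.

Lemma inv_diff (R : realType) (a c : R) : 1 <= a -> a <= c -> a^-1 - c^-1 <= c - a.
Proof.
move=> a1 ac.
have a0 : 0 < a by apply: lt_le_trans a1; exact: ltr01.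
have c0 : 0 < c by apply: lt_le_trans ac.
have -> : a^-1 - c^-1 = (c - a) / (a * c) by field; rewrite !gt_eqF.
rewrite ler_pdivrMr ?mulr_gt0 //.
have h : 1 <= a * c by rewrite -[1]mulr1 ler_pM // ?ler01 // (le_trans a1 ac).
rewrite -subr_ge0 -[X in _ - X]mulr1 -mulrBr mulr_ge0 // subr_ge0 //.
Qed.

Lemma inv_le (R : realType) (u v : R) : 0 < u -> 0 < v -> u <= v -> v^-1 <= u^-1.
Proof. by move=> u0 v0 uv; rewrite lef_pV2 ?posrE. Qed.

Lemma sd_bound (R : realType) (c : R) : 0 < c ->
  expR (- (2 * c)^-1) / (1 - expR (- (2 * c)^-1)) <= 2 * c.
Proof.
move=> c0; set th := (2 * c)^-1.
have th0 : 0 < th by rewrite invr_gt0 mulr_gt0.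
have e1 := expR_ge1Dx th.
have sdE : expR (- th) * expR th = 1 by rewrite -expRD addNr expR0.
have s0 := expR_gt0 (- th).
have s1 : expR (- th) < 1 by rewrite -expR0 ltr_expR oppr_lt0.
rewrite ler_pdivrMr ?subr_gt0 //.
have -> : 2 * c = th^-1 by rewrite invrK.
rewrite mulrC ler_pdivlMr //; nra.
Qed.

Lemma su_bound (R : realType) (c : R) : 0 < c -> 1 - expR (- c^-1) <= c^-1.
Proof. by move=> c0; have := expR_ge1Dx (- c^-1); lra. Qed.


Lemma k_bound (R : realType) (P : nat -> R * R) (i : 'I_2) (z : nat * nat) (T : R)
  (k n : nat) : hypP P -> (k <= n)%N ->
  (qlaw P 0 n z (fun s => (0 < coordt i (nth (0%N, 0%N) s k))%N &&
     (T <= `| ln ((coordt i (nth (0%N, 0%N) s k))%:R) - Senv P i k |)%R)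
   <= (6 * (coordt i z)%:R * expR (- T))%R%:E)%E.
Proof.
move=> hP kn.
set S := Senv P i k.
set cu := expR (S + T); set cd := expR (S - T).
have cu0 : 0 < cu by exact: expR_gt0.
have cd0 : 0 < cd by exact: expR_gt0.
set su := expR (- cu^-1); set sd := expR (- (2 * cd)^-1).
have su0 : 0 <= su by exact: ltW (expR_gt0 _).
have sd0 : 0 <= sd by exact: ltW (expR_gt0 _).
have su1 : su <= 1 by rewrite -expR0 ler_expR oppr_le0 invr_ge0 ltW.
have sd1 : sd <= 1 by rewrite -expR0 ler_expR oppr_le0 invr_ge0 ltW // mulr_gt0.
pose d1 (y : nat * nat) := 1 ^+ coordt i y - su ^+ coordt i y.
pose d2 (y : nat * nat) := sd ^+ coordt i y - 0 ^+ coordt i y.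
have d10 y : 0 <= d1 y by rewrite subr_ge0 lerXn2r // ?nnegrE // ler01.
have d20 y : 0 <= d2 y by rewrite subr_ge0 lerXn2r // ?nnegrE // lexx.
pose psi (y : nat * nat) := ((2 * d1 y)%:E + (2 * d2 y)%:E)%E.
apply: (@le_trans _ _ (Uex P 0 k psi z)).
  apply: qlaw_Uex => //.
    by move=> y; rewrite adde_ge0 // lee_fin mulr_ge0.
  move=> s; set X := coordt i (nth (0%N, 0%N) (z :: s) k).
  case/boolP: ((0 < X)%N && (T <= `| ln (X%:R) - S |)) => [/andP[X0 hT]|_].
    rewrite /psi -EFinD lee_fin /= mulr1n.
    have Xp : (X%:R : R) \in Num.pos by rewrite posrE ltr0n.
    have eX := lnK Xp.
    have z0 : (0 : R) ^+ X = 0 by rewrite expr0n gtn_eqF.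
    move: hT; rewrite ler_normr => /orP[hT|hT].
    - have cX : cu <= X%:R by rewrite -eX ler_expR; lra.
      have := up_pt cu0 cX.
      rewrite /d1 /d2 expr1n z0 subr0 -/su => h1.
      have := d20 (nth (0%N, 0%N) (z :: s) k); rewrite /d2 -/X z0 subr0 => h2.
      lra.
    - have cX : X%:R <= cd by rewrite -eX ler_expR; lra.
      have := down_pt cd0 cX.
      rewrite /d1 /d2 expr1n z0 subr0 -/sd => h1.
      have := d10 (nth (0%N, 0%N) (z :: s) k); rewrite /d1 -/X expr1n => h2.
      lra.
  by rewrite /psi -EFinD lee_fin /= mulr0n addr_ge0 ?mulr_ge0.
set x := coordt i z.
have su1' : su < 1 by rewrite -expR0 ltr_expR oppr_lt0 invr_gt0.
have sd1' : sd < 1 by rewrite -expR0 ltr_expR oppr_lt0 invr_gt0 mulr_gt0.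
have hU : Uex P 0 k psi z =
   (2 * ((Gc P i 0 k 1) ^+ x - (Gc P i 0 k su) ^+ x) +
    2 * ((Gc P i 0 k sd) ^+ x - (Gc P i 0 k 0) ^+ x))%:E.
  rewrite (@Uex_ext _ _ hP _ _ _ (fun y => 2%:E * (d1 y)%:E + 2%:E * (d2 y)%:E)%E); last first.
    by move=> y; rewrite /psi !EFinM.
  rewrite Uex_add //; last 2 first.
  - by move=> y; rewrite mule_ge0 // lee_fin.
  - by move=> y; rewrite mule_ge0 // lee_fin.
  rewrite !Uex_scale //.
  rewrite /d1 /d2 !Uex_diff // ?ler01 ?lexx //.
rewrite hU lee_fin Gc1 // expr1n.
have [b [b0 [hAb ht]]] := Gc_inv i hP k 0.
set A := Ac P i 0 k in hAb ht.
have AE : A = expR (- S) by rewrite /A /Ac /S /Senv add0n.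
have A0 : 0 < A by rewrite AE expR_gt0.
set F := Gc P i 0 k.
have Fr t : 0 <= t <= 1 -> 0 <= F t <= 1 by move=> h; exact: Gc_01.
have [Fsu1 Fsui] := ht su (introT andP (conj su0 su1')).
have [Fsd1 Fsdi] := ht sd (introT andP (conj sd0 sd1')).
have [F01 F0i] := ht 0 (introT andP (conj (lexx 0) ltr01)).
have /andP[Fsu0 _] := Fr su (introT andP (conj su0 su1)).
have /andP[Fsd0 _] := Fr sd (introT andP (conj sd0 sd1)).
have /andP[F00 _] := Fr 0 (introT andP (conj (lexx 0) ler01)).
set e := expR (- T).
have e0 : 0 < e by exact: expR_gt0.
have B1 : 1 - F su <= e.
  have -> : 1 - F su = (A / (1 - su) + b)^-1 by rewrite -Fsui invrK.
  have h : 0 < A / (1 - su) by rewrite divr_gt0 // subr_gt0.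
  apply: (@le_trans _ _ ((A / (1 - su))^-1)).
    by apply: inv_le => //; lra.
  rewrite invf_div ler_pdivrMr // AE.
  apply: (@le_trans _ _ cu^-1); first exact: su_bound.
  by rewrite /cu /e -expRN -expRD opprD [X in _ <= expR X]addrC.
have e1 : 1 - F sd = (A / (1 - sd) + b)^-1 by rewrite -Fsdi invrK.
have e2 : 1 - F 0 = (A / (1 - 0) + b)^-1 by rewrite -F0i invrK.
have eD : F sd - F 0 = (A / (1 - 0) + b)^-1 - (A / (1 - sd) + b)^-1.
  by rewrite -e1 -e2; ring.
have hA1 : A <= A / (1 - sd).
  rewrite ler_pdivlMr ?subr_gt0 //; nra.
have hD0 : 1 <= A / (1 - 0) + b by rewrite subr0 divr1.
have hD : A / (1 - 0) + b <= A / (1 - sd) + b by rewrite subr0 divr1 lerD2r.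
have F0sd : F 0 <= F sd.
  rewrite -subr_ge0 eD subr_ge0; apply: inv_le => //; lra.
have B2 : F sd - F 0 <= 2 * e.
  rewrite eD.
  apply: le_trans (inv_diff hD0 hD) _.
  have -> : A / (1 - sd) + b - (A / (1 - 0) + b) = A * (sd / (1 - sd)).
    by rewrite subr0 divr1; field; rewrite gt_eqF // subr_gt0.
  have -> : 2 * e = A * (2 * cd).
    by rewrite AE /cd /e mulrCA -expRD addrA addNr add0r.
  by rewrite ler_pM2l //; exact: sd_bound.
have x0 : 0 <= (x%:R : R) by exact: ler0n.
have P1 : 1 - F su ^+ x <= x%:R * e.
  apply: le_trans (_ : x%:R * (1 - F su) <= _).
    by have := powdiff x Fsu0 (ltW Fsu1) (lexx 1); rewrite expr1n.
  by rewrite ler_wpM2l.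
have P2 : F sd ^+ x - F 0 ^+ x <= x%:R * (2 * e).
  apply: le_trans (_ : x%:R * (F sd - F 0) <= _).
    exact: powdiff x F00 F0sd (ltW Fsd1).
  by rewrite ler_wpM2l.
nra.
Qed.


Lemma coordt00 (i : 'I_2) : coordt i (0%N, 0%N) = 0%N.
Proof. by rewrite /coordt; case: ifP. Qed.

Lemma valid_zero (i : 'I_2) : forall s a, valid i (a :: s) -> coordt i a = 0%N ->
  forall n, coordt i (nth (0%N, 0%N) (a :: s) n) = 0%N.
Proof.
elim=> [|b s IH] a hv ha [|n] //=; first by rewrite nth_nil coordt00.
move: hv => /= /andP[/implyP hab hv].
have hb : coordt i b = 0%N by apply/eqP; apply: hab; apply/eqP.
exact: (IH b hv hb n).
Qed.

Lemma valid_pos (i : 'I_2) : forall s k n, valid i s -> (k <= n)%N ->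
  (0 < coordt i (nth (0%N, 0%N) s n))%N -> (0 < coordt i (nth (0%N, 0%N) s k))%N.
Proof.
elim=> [|a s IH] k n hv hkn hn; first by move: hn; rewrite nth_nil coordt00.
case: k hkn => [|k] hkn /=.
  rewrite lt0n; apply/negP => /eqP ha.
  by move: hn; rewrite (valid_zero hv ha).
case: n hkn hn => [//|n] hkn hn /=.
apply: (IH k n) => //.
by move: hv; case: s {IH hn} => //= b s /andP[_].
Qed.

Unset Implicit Arguments. Set Strict Implicit.

Theorem lemma9 (R : realType) :
  exists C : R,
  forall (P : nat -> R * R),
    (forall m : nat, 0 < (P m).1 < 1 /\ 0 < (P m).2 < 1) ->
  forall (z : nat * nat) (eps : R) (i : 'I_2) (n : nat),
    0 < eps -> (0 < n)%N ->
    (quenched P z n (dev_event P i n eps)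
      <= (C * (coordt i z)%:R * n%:R * expR (- (eps * Num.sqrt (n%:R))))%:E)%E.
Proof.
exists 12 => P hP z eps i n eps0 n0.
have hP' : hypP P := hP.
set T := eps * Num.sqrt n%:R.
rewrite /quenched.
pose Ek (k : 'I_n.+1) (s : seq (nat * nat)) :=
  (0 < coordt i (nth (0%N, 0%N) s k))%N &&
  (T <= `| ln ((coordt i (nth (0%N, 0%N) s k))%:R) - Senv P i k |).
apply: (@le_trans _ _ (qlaw P 0 n z (fun s => [exists k, Ek k s]))).
  apply: (@qlaw_mono R P i hP') => s hv /andP[/existsP[k hk] hn].
  apply/existsP; exists k; rewrite /Ek hk andbT.
  by apply: (valid_pos hv _ hn); rewrite -ltnS ltn_ord.
apply: le_trans (qlaw_union hP' n 0 z Ek) _.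
apply: (@le_trans _ _ (\sum_(k < n.+1) (6 * (coordt i z)%:R * expR (- T))%:E)%E).
  by apply: lee_sum => k _; apply: k_bound => //; rewrite -ltnS ltn_ord.
rewrite sumEFin sumr_const card_ord lee_fin -[X in X <= _]mulr_natr.
have n1 : (1 : R) <= n%:R by rewrite ler1n.
have x0 : (0 : R) <= (coordt i z)%:R by exact: ler0n.
have e0 : 0 < expR (- T) by exact: expR_gt0.
have n1' : (0 : R) <= n%:R - 1 by rewrite subr_ge0.
have h := mulr_ge0 (mulr_ge0 x0 (ltW e0)) n1'.
rewrite -natr1; nra.
Qed.
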